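(* Let $X,Y\in M_n(\mathbb{C})$ be such that $[X,Y]=XY-YX$ is diagonal but nonzero. Consider the $n\times 2n$ matrix whose first $n$ columns are the diagonals of $X^0,X^1,\dots,X^{n-1}$ and whose last $n$ columns are the diagonals of $Y^0,Y^1,\dots,Y^{n-1}$. Then this matrix has rank at most $n-1$; in particular all of its $n\times n$ minors vanish.
   Context: For a matrix $Z\in M_n(\mathbb{C})$, its diagonal is the column vector $(Z_{11},\dots,Z_{nn})^T$; $X^0=Y^0=I$. *)

(* Defs.v *)
(* The complex numbers C are modelled as R[i] = complex R
   for R : realType (a complete archimedean ordered field, i.e. the reals). *)
From HB Require Import structures.
From mathcomp Require Import all_boot all_order all_algebra.
From mathcomp Require Import complex.
From mathcomp Require Import reals.
Set Implicit Arguments. Unset Strict Implicit. Unset Printing Implicit Defensive.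
Import Order.TTheory GRing.Theory Num.Theory.
Local Open Scope ring_scope.
Local Open Scope complex_scope.

Definition diag_col (F : pzRingType) (n : nat) (Z : 'M[F]_n) : 'cV[F]_n :=
  \col_i Z i i.

Definition powdiag_mx (F : pzRingType) (n : nat) (X Y : 'M[F]_n) : 'M[F]_(n, n + n) :=
  row_mx (\matrix_(i < n, j < n) diag_col (X ^+ j) i 0)
         (\matrix_(i < n, j < n) diag_col (Y ^+ j) i 0).

(* Main.v *)
Require Import Defs.
From HB Require Import structures.
From mathcomp Require Import all_boot all_order all_algebra.
From mathcomp Require Import complex.
From mathcomp Require Import reals.
Import Order.TTheory GRing.Theory Num.Theory.
Local Open Scope ring_scope.
Local Open Scope complex_scope.

Lemma key (F : fieldType) (n : nat) (X Y : 'M[F]_n) :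
  is_diag_mx (X * Y - Y * X) ->
  (\row_i (X * Y - Y * X) i i) *m powdiag_mx X Y = 0.
Proof.
move=> /is_diag_mxP Hd.
set D := X * Y - Y * X.
have tr_diag : forall A : 'M[F]_n, \sum_i D i i * A i i = \tr (D *m A).
  move=> A; rewrite /mxtrace; apply: eq_bigr => i _.
  rewrite [RHS]mxE (bigD1 i) //= big1 ?addr0 // => l Hl.
  by rewrite Hd ?mul0r // eq_sym.
have trX : forall k, \tr (D *m X ^+ k) = 0.
  move=> k; have -> : D *m X ^+ k = X *m (Y *m X ^+ k) - Y *m X ^+ k.+1.
    by rewrite /D mulmxBl exprS !mulmxE !mulrA.
  rewrite raddfB /= mxtrace_mulC -mulmxA !mulmxE -exprSr.
  by rewrite subrr.
have trY : forall k, \tr (D *m Y ^+ k) = 0.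
  move=> k; have -> : D *m Y ^+ k = X *m Y ^+ k.+1 - Y *m (X *m Y ^+ k).
    by rewrite /D mulmxBl exprS !mulmxE !mulrA.
  rewrite raddfB /= [\tr (Y *m _)]mxtrace_mulC -mulmxA !mulmxE -exprSr.
  by rewrite subrr.
apply/matrixP => i j; rewrite !mxE.
rewrite /powdiag_mx.
case: (splitP j) => k Hk.
- have -> : j = lshift n k by apply/val_inj.
  rewrite -[RHS](trX k) -tr_diag; apply: eq_bigr => l _.
  by rewrite row_mxEl !mxE.
- have -> : j = rshift n k by apply/val_inj.
  rewrite -[RHS](trY k) -tr_diag; apply: eq_bigr => l _.
  by rewrite row_mxEr !mxE.
Qed.

Theorem mainTheorem11 (R : realType) (n : nat) (X Y : 'M[R[i]]_n) :
  is_diag_mx (X * Y - Y * X) -> X * Y - Y * X != 0 ->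
  (\rank (powdiag_mx X Y) <= n.-1)%N /\
  (forall f : 'I_n -> 'I_(n + n), \det (colsub f (powdiag_mx X Y)) = 0).
Proof.
move=> Hd Hnz.
have Hk := @key _ _ X Y Hd.
set v := \row_i (X * Y - Y * X) i i.
have vnz : v != 0.
  apply: contra Hnz => /eqP v0; apply/eqP/matrixP => i j.
  move/is_diag_mxP: Hd => Hd.
  have [<-|ne] := eqVneq i j; last by rewrite Hd // mxE.
  by move/matrixP: v0 => /(_ 0 i); rewrite !mxE.
split.
  have : ~~ row_free (powdiag_mx X Y).
    by apply/negP => /mulmx_free_eq0 H; move: vnz; rewrite -H Hk eqxx.
  rewrite /row_free => H.
  have := rank_leq_row (powdiag_mx X Y).
  rewrite leq_eqVlt (negbTE H) /= => lt; rewrite -ltnS; exact: leq_trans lt (leqSpred n).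
move=> f; apply/eqP/det0P; exists v => //.
apply/matrixP => i j; rewrite !mxE.
move/matrixP: Hk => /(_ i (f j)); rewrite [RHS]mxE => H.
rewrite -[RHS]H [RHS]mxE; apply: eq_bigr => l _.
by rewrite /v [colsub _ _ _ _]mxE.
Qed.
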